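(* Assume the Two-interval setup below, with $\pm a$ in the limit point case and $0^\mp$ in the limit circle nonoscillatory case. Let $R_0\in SL(2,\mathbb R)$ with $(R_0)_{11}=(R_0)_{22}$, and let $S_{R_0}$ be the restriction of $S_{max}$ to $\{g:(\tilde g(0^-),\tilde g'(0^-))^T=R_0(\tilde g(0^+),\tilde g'(0^+))^T\}$. Define $\alpha,\alpha'\in(0,\pi]$ from $R_0=\begin{pmatrix}R_{11}&R_{12}\\R_{21}&R_{11}\end{pmatrix}$ by: $\alpha=\cot^{-1}\frac{R_{11}+1}{R_{12}}$, $\alpha'=\cot^{-1}\frac{R_{11}-1}{R_{12}}$ if $R_{12}\ne0$; $\alpha=\cot^{-1}\frac{-R_{21}}2$, $\alpha'=\pi$ if $R_{12}=0$, $R_{11}=-1$; $\alpha=\pi$, $\alpha'=\cot^{-1}\frac{R_{21}}2$ if $R_{12}=0$, $R_{11}=1$. Then $S_{R_0}$ is unitarily equivalent to $T^+_\alpha\oplus T^+_{\alpha'}$ in $L^2((0,a);rdx)\oplus L^2((0,a);rdx)$.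
   Context: Two-interval setup. Let $a\in(0,\infty]$ and let $p,q,r$ be real measurable on $(-a,0)\cup(0,a)$, even ($p(-x)=p(x)$ etc.), with $p,r>0$ a.e. and $1/p,q,r\in L^1_{loc}((-a,0))$ (hence also on $(0,a)$). Let $\tau^\pm$ be the expression $\frac1r[-\frac{d}{dx}p\frac{d}{dx}+q]$ on $(0,a)$ resp. $(-a,0)$, with maximal/minimal operators $T^\pm_{max},T^\pm_{min}$ in $L^2$ of the respective interval with weight $r$ (maximal: $\tau^\pm$ on $g\in L^2$ with $g,pg'\in AC_{loc}$ and $\tau^\pm g\in L^2$; minimal: closure of restriction to compactly supported elements); $S_{max}=T^-_{max}\oplus T^+_{max}$, $S_{min}=T^-_{min}\oplus T^+_{min}$, and $S_{min}$ is assumed bounded below by $\lambda_0$. $y^{[1]}=py'$, $W(f,g)=fg^{[1]}-f^{[1]}g$. Limit circle at an endpoint: all solutions of $\tau u=zu$ in $L^2(rdx)$ near it for all $z$; limit point otherwise. At $0^+$ (left endpoint of $(0,a)$) fix principal/nonprincipal solutions $u_{0^+},\hat u_{0^+}$ of $\tau u=\lambda_0u$ (principal: real solution nonvanishing near $0^+$ with $\int p^{-1}u^{-2}=\infty$ near $0^+$; nonprincipal: linearly independent real solution) with $W(\hat u_{0^+},u_{0^+})=1$, and at $0^-$ use $u_{0^-}(x)=-u_{0^+}(-x)$, $\hat u_{0^-}(x)=\hat u_{0^+}(-x)$. Generalized boundary values: $\tilde g(0^+)=-\lim_{x\downarrow0}W(u_{0^+},g)(x)$, $\tilde g'(0^+)=\lim_{x\downarrow0}W(\hat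 u_{0^+},g)(x)$, $\tilde g(0^-)=-\lim_{x\uparrow0}W(u_{0^-},g)(x)$, $\tilde g'(0^-)=\lim_{x\uparrow0}W(\hat u_{0^-},g)(x)$. For $\alpha\in(0,\pi]$, $T^+_\alpha$ is the restriction of $T^+_{max}$ to $\{g:\tilde g(0^+)\cos\alpha+\tilde g'(0^+)\sin\alpha=0\}$. $\cot^{-1}$ takes values in $(0,\pi)$. *)

(* Defs.v *)
From HB Require Import structures.
From mathcomp Require Import all_boot all_order all_algebra.
From mathcomp Require Import all_classical all_reals all_analysis.
Set Implicit Arguments. Unset Strict Implicit. Unset Printing Implicit Defensive.
Import Order.TTheory GRing.Theory Num.Theory numFieldNormedType.Exports.
Local Open Scope classical_set_scope.
Local Open Scope ring_scope.

Section TwoInterval.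
Variable R : realType.
Local Notation mu := (@lebesgue_measure R).

Definition Ipos (a : \bar R) : set R := [set x | 0 < x /\ (x%:E < a)%E].
Definition Ineg (a : \bar R) : set R := [set x | (- a < x%:E)%E /\ x < 0].
Definition Jtwo (a : \bar R) : set R := Ineg a `|` Ipos a.

Definition rint (s t : R) (f : R -> R) : R :=
  fine (\int[mu]_(x in `[s, t]) (f x)%:E).

Definition loc_int (I : set R) (f : R -> R) : Prop :=
  forall s t, s <= t -> `[s, t] `<=` I -> mu.-integrable `[s, t] (EFin \o f).

(** g, g1 : real functions with g in AC_loc(I), g1 = p g' (chosen AC_loc
    version of the quasi-derivative), and  -(g1)' + q g = r f  a.e.;
    written through the integral characterisation of local absolute
    continuity. *)
Definition qsol (I : set R) (p q r : R -> R) (g g1 f : R -> R) : Prop :=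
  loc_int I (fun x => g1 x / p x) /\
  loc_int I (fun x => q x * g x - r x * f x) /\
  forall s t, s <= t -> `[s, t] `<=` I ->
    g t - g s = rint s t (fun x => g1 x / p x) /\
    g1 t - g1 s = rint s t (fun x => q x * g x - r x * f x).

(** complex-valued functions, represented by (real part, imaginary part) *)
Definition cfun := ((R -> R) * (R -> R))%type.

(** complex solution of tau u = z u (z = zr + i zi) on I, with quasi-derivative u1 *)
Definition csol (I : set R) (p q r : R -> R) (zr zi : R) (u u1 : cfun) : Prop :=
  qsol I p q r u.1 u1.1 (fun x => zr * u.1 x - zi * u.2 x) /\
  qsol I p q r u.2 u1.2 (fun x => zr * u.2 x + zi * u.1 x).

Definition cnorm2 (A : set R) (r : R -> R) (g : cfun) : \bar R :=
  \int[mu]_(x in A) (r x * (g.1 x ^+ 2 + g.2 x ^+ 2))%:E.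
Definition L2c (A : set R) (r : R -> R) (g : cfun) : Prop :=
  measurable_fun A g.1 /\ measurable_fun A g.2 /\
  mu.-integrable A (fun x => (r x * (g.1 x ^+ 2 + g.2 x ^+ 2))%:E).
Definition aeqc (A : set R) (g h : cfun) : Prop :=
  {ae mu, forall x, A x -> g.1 x = h.1 x /\ g.2 x = h.2 x}.

Definition cadd (g h : cfun) : cfun :=
  (fun x => g.1 x + h.1 x, fun x => g.2 x + h.2 x).
(** multiplication by the complex scalar c1 + i c2 *)
Definition cscale (c1 c2 : R) (g : cfun) : cfun :=
  (fun x => c1 * g.1 x - c2 * g.2 x, fun x => c1 * g.2 x + c2 * g.1 x).

(** limit circle at an endpoint, given via the sets "near the endpoint":
    for every z, every solution of tau u = z u on I lies in L^2 near it. *)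
Definition LC_right (a : \bar R) (p q r : R -> R) : Prop :=
  forall zr zi (u u1 : cfun), csol (Ipos a) p q r zr zi u u1 ->
    forall c, 0 < c -> (c%:E < a)%E ->
      L2c [set x | c < x /\ (x%:E < a)%E] r u.
Definition LC_left_neg (a : \bar R) (p q r : R -> R) : Prop :=
  forall zr zi (u u1 : cfun), csol (Ineg a) p q r zr zi u u1 ->
    forall c, (- a < c%:E)%E -> c < 0 ->
      L2c [set x | (- a < x%:E)%E /\ x < c] r u.
Definition LC_zero_pos (a : \bar R) (p q r : R -> R) : Prop :=
  forall zr zi (u u1 : cfun), csol (Ipos a) p q r zr zi u u1 ->
    forall c, 0 < c -> (c%:E < a)%E -> L2c [set x | 0 < x /\ x < c] r u.
Definition LC_zero_neg (a : \bar R) (p q r : R -> R) : Prop :=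
  forall zr zi (u u1 : cfun), csol (Ineg a) p q r zr zi u u1 ->
    forall c, c < 0 -> (- a < c%:E)%E -> L2c [set x | c < x /\ x < 0] r u.

Definition NO_zero_pos (a : \bar R) (p q r : R -> R) : Prop :=
  exists lam : R, forall u u1 : R -> R,
    qsol (Ipos a) p q r u u1 (fun x => lam * u x) ->
    (exists x, Ipos a x /\ u x != 0) ->
    exists e, 0 < e /\ forall x, 0 < x -> x < e -> u x != 0.
Definition NO_zero_neg (a : \bar R) (p q r : R -> R) : Prop :=
  exists lam : R, forall u u1 : R -> R,
    qsol (Ineg a) p q r u u1 (fun x => lam * u x) ->
    (exists x, Ineg a x /\ u x != 0) ->
    exists e, 0 < e /\ forall x, - e < x -> x < 0 -> u x != 0.

Definition wr (u u1 : R -> R) (g g1 : cfun) : cfun :=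
  (fun x => u x * g1.1 x - u1 x * g.1 x, fun x => u x * g1.2 x - u1 x * g.2 x).

Definition clim (F : set_system R) (w : cfun) (l : R * R) : Prop :=
  (w.1 @ F --> l.1) /\ (w.2 @ F --> l.2).

Definition tmax (I : set R) (p q r : R -> R) (g g1 f : cfun) : Prop :=
  L2c I r g /\ L2c I r f /\
  qsol I p q r g.1 g1.1 f.1 /\ qsol I p q r g.2 g1.2 f.2.

Definition smax (a : \bar R) (p q r : R -> R) (g g1 f : cfun) : Prop :=
  tmax (Ineg a) p q r g g1 f /\ tmax (Ipos a) p q r g g1 f.

(** arccot with values in (0, pi) *)
Definition acot (y : R) : R := pi / 2 - atan y.

(** the angles alpha, alpha' of the theorem, for R0 = [[m11,m12],[m21,m11]] *)
Definition alpha_of (m11 m12 m21 : R) : R :=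
  if m12 != 0 then acot ((m11 + 1) / m12)
  else if m11 == -1 then acot (- m21 / 2) else pi.
Definition alpha'_of (m11 m12 m21 : R) : R :=
  if m12 != 0 then acot ((m11 - 1) / m12)
  else if m11 == -1 then pi else acot (m21 / 2).

(** A crude model of a (complex) Hilbert space of L^2 type: carrier of
    representatives, membership, a.e.-equivalence, operations, squared norm *)
Record hmodel := HModel {
  hcar : Type;
  hmem : hcar -> Prop;
  heq : hcar -> hcar -> Prop;
  hadd : hcar -> hcar -> hcar;
  hscale : R -> R -> hcar -> hcar;
  hnorm2 : hcar -> \bar R }.

(** unitary equivalence of the operators with graphs S (in H) and T (in K):
    a map U, well defined on classes, complex linear, isometric, onto,
    with U S U^{-1} = T (graphs correspond modulo equality of classes). *)
Definition unitarily_equiv (H K : hmodel)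
    (S : hcar H -> hcar H -> Prop) (T : hcar K -> hcar K -> Prop) : Prop :=
  exists U : hcar H -> hcar K,
    (forall g, hmem g -> hmem (U g)) /\
    (forall g h, hmem g -> hmem h -> heq g h -> heq (U g) (U h)) /\
    (forall g h, hmem g -> hmem h -> heq (U (hadd g h)) (hadd (U g) (U h))) /\
    (forall c1 c2 g, hmem g -> heq (U (hscale c1 c2 g)) (hscale c1 c2 (U g))) /\
    (forall g, hmem g -> hnorm2 (U g) = hnorm2 g) /\
    (forall k, hmem k -> exists g, hmem g /\ heq (U g) k) /\
    (forall g f, S g f -> exists g' f', T g' f' /\ heq (U g) g' /\ heq (U f) f') /\
    (forall g' f', T g' f' -> exists g f, S g f /\ heq (U g) g' /\ heq (U f) f').

Definition HJ (a : \bar R) (r : R -> R) : hmodel :=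
  @HModel cfun (L2c (Jtwo a) r) (aeqc (Jtwo a)) cadd cscale (cnorm2 (Jtwo a) r).
Definition HPP (a : \bar R) (r : R -> R) : hmodel :=
  @HModel (cfun * cfun)%type
    (fun g => L2c (Ipos a) r g.1 /\ L2c (Ipos a) r g.2)
    (fun g h => aeqc (Ipos a) g.1 h.1 /\ aeqc (Ipos a) g.2 h.2)
    (fun g h => (cadd g.1 h.1, cadd g.2 h.2))
    (fun c1 c2 g => (cscale c1 c2 g.1, cscale c1 c2 g.2))
    (fun g => (cnorm2 (Ipos a) r g.1 + cnorm2 (Ipos a) r g.2)%E).

(** Boundary values at 0+ with respect to the fixed u_{0+}, \hat u_{0+}
    (given with their quasi-derivatives u1, uh1):
    bv+ = (-lim W(u_{0+},g), lim W(\hat u_{0+}, g)) as x -> 0+. *)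
Definition bv_pos (u u1 uh uh1 : R -> R) (g g1 : cfun) (A B : R * R) : Prop :=
  clim (0 : R)^'+ (wr u u1 g g1) (- A.1, - A.2) /\
  clim (0 : R)^'+ (wr uh uh1 g g1) B.
(** at 0- with u_{0-}(x) = -u_{0+}(-x), \hat u_{0-}(x) = \hat u_{0+}(-x);
    their quasi-derivatives are u_{0-}^[1](x) = u1(-x),
    \hat u_{0-}^[1](x) = - uh1(-x)  (p being even). *)
Definition bv_neg (u u1 uh uh1 : R -> R) (g g1 : cfun) (A B : R * R) : Prop :=
  clim (0 : R)^'- (wr (fun x => - u (- x)) (fun x => u1 (- x)) g g1) (- A.1, - A.2) /\
  clim (0 : R)^'- (wr (fun x => uh (- x)) (fun x => - uh1 (- x)) g g1) B.

Definition talpha (a : \bar R) (p q r : R -> R) (u u1 uh uh1 : R -> R)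
    (al : R) (g f : cfun) : Prop :=
  exists g1 : cfun, tmax (Ipos a) p q r g g1 f /\
  exists A B : R * R, bv_pos u u1 uh uh1 g g1 A B /\
    A.1 * cos al + B.1 * sin al = 0 /\ A.2 * cos al + B.2 * sin al = 0.

(** graph of S_{R0}, R0 = [[m11, m12], [m21, m22]] *)
Definition sR0 (a : \bar R) (p q r : R -> R) (u u1 uh uh1 : R -> R)
    (m11 m12 m21 m22 : R) (g f : cfun) : Prop :=
  exists g1 : cfun, smax a p q r g g1 f /\
  exists Ap Bp An Bn : R * R,
    bv_pos u u1 uh uh1 g g1 Ap Bp /\ bv_neg u u1 uh uh1 g g1 An Bn /\
    An.1 = m11 * Ap.1 + m12 * Bp.1 /\ Bn.1 = m21 * Ap.1 + m22 * Bp.1 /\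
    An.2 = m11 * Ap.2 + m12 * Bp.2 /\ Bn.2 = m21 * Ap.2 + m22 * Bp.2.

End TwoInterval.
Arguments unitarily_equiv {R} H K S T.

(* Main.v *)
Require Import Defs.
From HB Require Import structures.
From mathcomp Require Import all_boot all_order all_algebra.
From mathcomp Require Import all_classical all_reals all_analysis.
From mathcomp Require Import measurable_realfun.
From mathcomp.algebra_tactics Require Import ring lra.
Set Implicit Arguments. Unset Strict Implicit. Unset Printing Implicit Defensive.
Import Order.TTheory GRing.Theory Num.Theory numFieldNormedType.Exports.
Local Open Scope classical_set_scope.
Local Open Scope ring_scope.

Section Refl.
Variable R : realType.
Local Notation mu := (@lebesgue_measure R).

Definition refl (A : set R) : set R := [set x | A (- x)].

Lemma refl_preimage A : refl A = -%R @^-1` A. Proof. by []. Qed.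

Lemma measurable_refl A : measurable A -> measurable (refl A).
Proof.
move=> mA; rewrite refl_preimage -[X in measurable X]setTI.
exact: (@oppr_measurable R setT).
Qed.

Definition nuR (A : set (measurableTypeR R)) : \bar R := mu (refl A).
Let nuR0 : nuR set0 = 0%E.
Proof. by rewrite /nuR /refl -[X in mu X]/(-%R @^-1` set0) preimage_set0 measure0. Qed.
Let nuR_ge0 A : (0 <= nuR A)%E.
Proof. exact: measure_ge0. Qed.
Let nuR_sigma_additive : semi_sigma_additive nuR.
Proof.
move=> F mF tF mUF; rewrite /nuR refl_preimage preimage_bigcup.
apply: measure_semi_sigma_additive.
- by move=> n; apply: (@measurable_refl (F n)); exact: mF.
- apply/trivIsetP => /= i j _ _ ij; rewrite -preimage_setI.
  by move/trivIsetP : tF => /(_ _ _ _ _ ij) ->//; rewrite preimage_set0.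
- by rewrite -preimage_bigcup; apply: (@measurable_refl (\bigcup_n F n)); exact: mUF.
Qed.
HB.instance Definition _ := isMeasure.Build _ _ _ nuR nuR0 nuR_ge0 nuR_sigma_additive.

Lemma mu_refl A : measurable A -> mu (refl A) = mu A.
Proof.
move=> mA.
suff H : forall X, ocitv X -> mu X = nuR X.
  by rewrite (@lebesgue_measure_unique R nuR H A mA).
move=> X /ocitvP [->|[[x y] /= xy ->]].
  by rewrite /nuR /refl -[X in mu X]/(-%R @^-1` set0) preimage_set0.
rewrite /nuR.
have -> : refl `]x, y] = `[- y, - x[%classic.
  apply/seteqP; split => z; rewrite /refl /= !in_itv /=.
    by move=> /andP[h1 h2]; apply/andP; split; [rewrite lerNl|rewrite ltrNr].
  by move=> /andP[h1 h2]; apply/andP; split; [rewrite ltrNr|rewrite lerNl].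
rewrite !lebesgue_measure_itv /= !lte_fin ltrN2 xy.
by rewrite opprK addeC.
Qed.

Lemma nuR_mu A : measurable A -> nuR A = mu A.
Proof. exact: mu_refl. Qed.

Lemma ge0_integral_refl0 D (f : R -> \bar R) : measurable D -> measurable_fun D f ->
  (forall x, D x -> 0 <= f x)%E ->
  (\int[mu]_(x in D) f x = \int[mu]_(x in (-%R : R -> measurableTypeR R) @^-1` D)
     (f \o (-%R : R -> measurableTypeR R)) x)%E.
Proof.
move=> mD mf f0.
rewrite -[RHS]ge0_integral_pushforward//=; last by move=> y; rewrite inE; exact: f0.
by apply: eq_measure_integral => //= A mA AS; exact/esym/lebesgue_measureN.
Qed.

Lemma ge0_integral_refl D (f : R -> \bar R) : measurable D -> measurable_fun D f ->
  (forall x, D x -> 0 <= f x)%E ->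
  (\int[mu]_(x in D) f x = \int[mu]_(x in refl D) f (- x)%R)%E.
Proof. exact: ge0_integral_refl0. Qed.

Lemma reflK A : refl (refl A) = A.
Proof. by apply/seteqP; split => x; rewrite /refl /= opprK. Qed.

Lemma measurable_fun_refl d' (T : measurableType d') D (f : R -> T) :
  measurable D -> measurable_fun D f -> measurable_fun (refl D) (fun x => f (- x)).
Proof.
move=> mD mf.
apply: (@measurable_comp _ _ _ _ _ _ D f (refl D) (-%R : R -> R)) => //.
by move=> _ [x Dx <-].
Qed.

Lemma integral_refl D (f : R -> \bar R) : measurable D -> measurable_fun D f ->
  (\int[mu]_(x in D) f x = \int[mu]_(x in refl D) f (- x)%R)%E.
Proof.
move=> mD mf; rewrite integralE [RHS]integralE.
rewrite ge0_integral_refl //; last exact: measurable_funepos.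
rewrite [X in (_ - X)%E]ge0_integral_refl // ; last exact: measurable_funeneg.
congr (_ - _)%E; apply: eq_integral => x _. by rewrite -[LHS]/((f^\+ \o -%R) x)%E -funepos_comp. by rewrite -[LHS]/((f^\- \o -%R) x)%E -funeneg_comp.
Qed.

Lemma integrable_refl D (f : R -> \bar R) : measurable D ->
  mu.-integrable D f -> mu.-integrable (refl D) (fun x => f (- x)%R).
Proof.
move=> mD /integrableP[mf fi]; apply/integrableP; split.
  exact: measurable_fun_refl.
rewrite (@ge0_integral_refl D (fun x => `|f x|)%E) // in fi.
exact: measurableT_comp.
Qed.

Lemma negligible_refl N : mu.-negligible N -> mu.-negligible (refl N).
Proof.
move=> [A [mA A0 NA]]; exists (refl A); split.
- exact: measurable_refl.
- by rewrite mu_refl.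
- by move=> x; exact: NA.
Qed.
End Refl.

Section Q.
Variable R : realType.
Local Notation mu := (@lebesgue_measure R).

Lemma refl_itv (s t : R) : refl `[s, t]%classic = `[- t, - s]%classic.
Proof.
apply/seteqP; split => x; rewrite /refl /= !in_itv /= => /andP[h1 h2];
  apply/andP; split; by [rewrite lerNr | rewrite lerNl].
Qed.

Lemma sub_refl (I : set R) s t : `[s, t]%classic `<=` refl I -> `[- t, - s]%classic `<=` I.
Proof.
move=> h x; rewrite /= in_itv /= => /andP[h1 h2].
rewrite -[x]opprK; apply: (h (- x)); rewrite /= in_itv /=.
by apply/andP; split; [rewrite lerNr | rewrite lerNl].
Qed.

Lemma rint_refl (s t : R) h : measurable_fun `[- t, - s]%classic h ->
  rint s t (fun x => h (- x)) = rint (- t) (- s) h.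
Proof.
move=> mh; rewrite /rint (@integral_refl _ `[- t, - s]%classic (EFin \o h)) //.
  by rewrite refl_itv !opprK.
exact/measurable_EFinP.
Qed.

Lemma rint_ext (s t : R) h1 h2 : {in `[s, t]%classic, h1 =1 h2} -> rint s t h1 = rint s t h2.
Proof. by move=> e; rewrite /rint; congr fine; apply: eq_integral => x /e ->. Qed.

Lemma rint_lin (s t al be : R) h1 h2 :
  mu.-integrable `[s, t]%classic (EFin \o h1) -> mu.-integrable `[s, t]%classic (EFin \o h2) ->
  rint s t (fun x => al * h1 x + be * h2 x) = al * rint s t h1 + be * rint s t h2.
Proof.
move=> i1 i2; rewrite /rint.
have -> : (\int[mu]_(x in `[s, t]%classic) (al * h1 x + be * h2 x)%:E =
    al%:E * \int[mu]_(x in `[s, t]%classic) (h1 x)%:E + be%:E * \int[mu]_(x in `[s, t]%classic) (h2 x)%:E)%E.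
  rewrite -(integralZl _ i1) // -(integralZl _ i2) // -integralD //.
  - exact: integrableZl.
  - exact: integrableZl.
have f1 : (\int[mu]_(x in `[s, t]%classic) (h1 x)%:E)%E \is a fin_num.
  by apply: integrable_fin_num => //.
have f2 : (\int[mu]_(x in `[s, t]%classic) (h2 x)%:E)%E \is a fin_num.
  by apply: integrable_fin_num => //.
rewrite fineD ?fineM //; rewrite ?fin_numM //.
Qed.


Lemma loc_int_lin (I : set R) (al be : R) h1 h2 : loc_int I h1 -> loc_int I h2 ->
  loc_int I (fun x => al * h1 x + be * h2 x).
Proof.
move=> i1 i2 s t st sub.
apply: (@eq_integrable _ _ _ mu _ _ (fun x => al%:E * (h1 x)%:E + be%:E * (h2 x)%:E)%E).
- by [].
- by move=> x _; rewrite /= EFinD !EFinM.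
apply: integrableD => //; apply: integrableZl => //.
  exact: i1.
exact: i2.
Qed.

Lemma loc_int_ext (I : set R) h1 h2 : (forall x, I x -> h1 x = h2 x) ->
  loc_int I h1 -> loc_int I h2.
Proof.
move=> e i1 s t st sub; apply: eq_integrable (i1 s t st sub) => //.
by move=> x /set_mem /sub /e /= ->.
Qed.

Lemma loc_int_refl (I : set R) h : loc_int I h -> loc_int (refl I) (fun x => h (- x)).
Proof.
move=> i1 s t st sub.
have := @integrable_refl _ _ (EFin \o h) (measurable_itv _) (i1 (- t) (- s) _ (sub_refl sub)).
rewrite refl_itv !opprK; apply; by rewrite lerN2.
Qed.

Lemma loc_int_sub (I : set R) h s t : loc_int I h -> s <= t -> `[s, t]%classic `<=` I ->
  measurable_fun `[s, t]%classic h.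
Proof.
move=> i1 st sub; have := i1 s t st sub.
by move/measurable_int/measurable_EFinP.
Qed.

Variables p q r : R -> R.

Lemma qsol_ext (I : set R) g g1 f g' g1' f' :
  (forall x, I x -> [/\ g x = g' x, g1 x = g1' x & f x = f' x]) ->
  qsol I p q r g g1 f -> qsol I p q r g' g1' f'.
Proof.
move=> e [l1 [l2 h]]; split; last split.
- by apply: loc_int_ext l1 => x /e [_ -> _].
- by apply: loc_int_ext l2 => x /e [-> _ ->].
move=> s t st sub; have [s1 s2] := h s t st sub.
have Is : I s by apply: sub; rewrite /= in_itv /= lexx st.
have It : I t by apply: sub; rewrite /= in_itv /= lexx st.
have [gs g1s _] := e s Is; have [gt g1t _] := e t It.
split.
  rewrite -gs -gt s1; apply: rint_ext => x /set_mem /sub /e [_ -> _] //.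
rewrite -g1s -g1t s2; apply: rint_ext => x /set_mem /sub /e [-> _ ->] //.
Qed.

Lemma qsol_lin (I : set R) (al be : R) g g1 f h h1 k :
  qsol I p q r g g1 f -> qsol I p q r h h1 k ->
  qsol I p q r (fun x => al * g x + be * h x) (fun x => al * g1 x + be * h1 x)
    (fun x => al * f x + be * k x).
Proof.
move=> [l1 [l2 H1]] [m1 [m2 H2]]; split; last split.
- apply: loc_int_ext (loc_int_lin al be l1 m1) => x _; rewrite /=; ring.
- apply: loc_int_ext (loc_int_lin al be l2 m2) => x _; rewrite /=; ring.
move=> s t st sub; have [a1 a2] := H1 s t st sub; have [b1 b2] := H2 s t st sub.
split.
  transitivity (al * (g t - g s) + be * (h t - h s)); first ring.
  rewrite a1 b1 -rint_lin; [|exact: l1|exact: m1].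
  by apply: rint_ext => x _ /=; ring.
transitivity (al * (g1 t - g1 s) + be * (h1 t - h1 s)); first ring.
rewrite a2 b2 -rint_lin; [|exact: l2|exact: m2].
by apply: rint_ext => x _ /=; ring.
Qed.

Hypotheses (p_even : forall x, p (- x) = p x) (q_even : forall x, q (- x) = q x)
  (r_even : forall x, r (- x) = r x).

Lemma qsol_refl (I : set R) g g1 f : qsol I p q r g g1 f ->
  qsol (refl I) p q r (fun x => g (- x)) (fun x => - g1 (- x)) (fun x => f (- x)).
Proof.
move=> [l1 [l2 H]]; split; last split.
- apply: loc_int_ext (loc_int_lin (-1) 0 (loc_int_refl l1) (loc_int_refl l1)) => x _.
  by rewrite /= p_even; ring.
- apply: loc_int_ext (loc_int_refl l2) => x _.
  by rewrite /= q_even r_even.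
move=> s t st sub; have st' : - t <= - s by rewrite lerN2.
have [a1 a2] := H (- t) (- s) st' (sub_refl sub).
split.
  transitivity (- (g (- s) - g (- t))); first ring.
  rewrite a1 -rint_refl; last exact: (loc_int_sub l1 st' (sub_refl sub)).
  transitivity (-1 * rint s t (fun x => g1 (- x) / p (- x)) + 0 * rint s t (fun x => g1 (- x) / p (- x))); first ring.
  rewrite -rint_lin; [|exact: (loc_int_refl l1)|exact: (loc_int_refl l1)].
  by apply: rint_ext => x _ /=; rewrite p_even; ring.
transitivity (g1 (- s) - g1 (- t)); first ring.
rewrite a2 -rint_refl; last exact: (loc_int_sub l2 st' (sub_refl sub)).
by apply: rint_ext => x _ /=; rewrite q_even r_even.
Qed.
End Q.

Section L.
Variable R : realType.
Local Notation mu := (@lebesgue_measure R).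

Lemma refl_Ipos (a : \bar R) : refl (Ipos a) = Ineg a.
Proof.
apply/seteqP; split => x; rewrite /refl /Ipos /Ineg /= EFinN.
  by move=> [h1 h2]; split; [rewrite lteNl | rewrite oppr_gt0 in h1].
by move=> [h1 h2]; split; [rewrite oppr_gt0 | rewrite lteNl].
Qed.

Lemma refl_Ineg (a : \bar R) : refl (Ineg a) = Ipos a.
Proof. by rewrite -refl_Ipos reflK. Qed.

Lemma Ipos_meas (a : \bar R) : measurable (Ipos a).
Proof.
case: a => [s| |].
- rewrite (_ : Ipos _ = `]0, s[%classic); first exact: measurable_itv.
  apply/seteqP; split => x; rewrite /Ipos /= in_itv /= lte_fin.
    by move=> [-> ->].
  by move=> /andP[-> ->].
- rewrite (_ : Ipos _ = `]0, +oo[%classic); first exact: measurable_itv.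
  apply/seteqP; split => x; rewrite /Ipos /= in_itv /= ?ltry ?andbT.
    by move=> [].
  by move=> ->.
- rewrite (_ : Ipos _ = set0) //.
  apply/seteqP; split => x; rewrite /Ipos /= //.
  by move=> [_]; rewrite ltNge leNye.
Qed.

Lemma Ineg_meas (a : \bar R) : measurable (Ineg a).
Proof. by rewrite -refl_Ipos; apply: measurable_refl; exact: Ipos_meas. Qed.

Lemma Jtwo_meas (a : \bar R) : measurable (Jtwo a).
Proof. exact: measurableU (Ineg_meas a) (Ipos_meas a). Qed.

Lemma Ineg_Ipos_disj (a : \bar R) : [disjoint Ineg a & Ipos a].
Proof.
apply/disj_setPS => x [[_ h1] [h2 _]]; rewrite /=; lra.
Qed.


Lemma L2c_ext (A : set R) r (g h : cfun R) : measurable A ->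
  (forall x, A x -> g.1 x = h.1 x /\ g.2 x = h.2 x) -> L2c A r g -> L2c A r h.
Proof.
move=> mA e [m1 [m2 i]]; split; last split.
- by apply: eq_measurable_fun m1 => x /set_mem /e [].
- by apply: eq_measurable_fun m2 => x /set_mem /e [].
apply: eq_integrable i => // x /set_mem /e [-> ->] //.
Qed.

Lemma L2c_refl (A : set R) r (g : cfun R) : (forall x, r (- x) = r x) -> measurable A ->
  L2c A r g -> L2c (refl A) r (fun x => g.1 (- x), fun x => g.2 (- x)).
Proof.
move=> re mA [m1 [m2 i]]; split; last split.
- exact: measurable_fun_refl.
- exact: measurable_fun_refl.
have := integrable_refl mA i.
by apply: eq_integrable => //=; [exact: measurable_refl | move=> x _; rewrite re].
Qed.

Lemma L2c_sub (A B : set R) r (g : cfun R) : measurable A -> measurable B -> B `<=` A ->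
  L2c A r g -> L2c B r g.
Proof.
move=> mA mB BA [m1 [m2 i]]; split; last split.
- exact: measurable_funS m1.
- exact: measurable_funS m2.
exact: integrableS i.
Qed.

Lemma L2c_union (A B : set R) r (g : cfun R) : measurable A -> measurable B ->
  L2c A r g -> L2c B r g -> L2c (A `|` B) r g.
Proof.
move=> mA mB [m1 [m2 i]] [n1 [n2 j]]; split; last split.
- by apply/measurable_funU.
- by apply/measurable_funU.
move/integrableP : i => [mi fi]; move/integrableP : j => [mj fj].
apply/integrableP; split; first by apply/measurable_funU.
apply: (@le_lt_trans _ _ (\int[mu]_(x in A) `|(r x * (g.1 x ^+ 2 + g.2 x ^+ 2))%:E| +
   \int[mu]_(x in B) `|(r x * (g.1 x ^+ 2 + g.2 x ^+ 2))%:E|)%E); last exact: lte_add_pinfty.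
have mAB : measurable (A `|` B) by exact: measurableU.
rewrite -{1}(setDUK (@subsetUl _ A B)) (@ge0_integral_setU _ _ _ mu A ((A `|` B) `\` A)) //.
- apply: leeD => //; apply: ge0_subset_integral => //.
  + exact: measurableD.
  + by apply: measurableT_comp => //; exact: measurable_funS mj.
  + by move=> x [[]].
- by apply: measurableD.
- by rewrite (setDUK (@subsetUl _ A B)); apply: measurableT_comp => //; apply/measurable_funU.
- by apply/disj_setPS => x [h1 [_ h2]].
Qed.

Lemma sq_bound (al be a1 a2 b1 b2 : R) :
  (al * a1 + be * b1) ^+ 2 + (al * a2 + be * b2) ^+ 2 <=
  2 * (al ^+ 2 + be ^+ 2) * ((a1 ^+ 2 + a2 ^+ 2) + (b1 ^+ 2 + b2 ^+ 2)).
Proof.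
have h1 := sqr_ge0 (al * a1 - be * b1).
have h2 := sqr_ge0 (al * a2 - be * b2).
have h3 := sqr_ge0 (al * b1). have h4 := sqr_ge0 (al * b2).
have h5 := sqr_ge0 (be * a1). have h6 := sqr_ge0 (be * a2).
nra.
Qed.

Lemma L2c_lin (A : set R) r (al be : R) (g h : cfun R) : measurable A ->
  measurable_fun A r -> L2c A r g -> L2c A r h ->
  L2c A r (fun x => al * g.1 x + be * h.1 x, fun x => al * g.2 x + be * h.2 x).
Proof.
move=> mA mr [m1 [m2 i]] [n1 [n2 j]].
have mc : forall (k : R), measurable_fun A (fun _ : R => k) by move=> k; exact: measurable_cst.
have ml : forall f1 f2 : R -> R, measurable_fun A f1 -> measurable_fun A f2 ->
    measurable_fun A (fun x => al * f1 x + be * f2 x).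
  by move=> f1 f2 mf1 mf2; apply: measurable_funD; apply: measurable_funM.
split; last split; rewrite /=.
- exact: ml.
- exact: ml.
pose K := 2 * (al ^+ 2 + be ^+ 2).
apply: (@le_integrable _ _ _ mu A mA _
  (fun x => (K * (`|r x * (g.1 x ^+ 2 + g.2 x ^+ 2)| + `|r x * (h.1 x ^+ 2 + h.2 x ^+ 2)|))%:E)).
- apply/measurable_EFinP; apply: measurable_funM => //.
  apply: measurable_funD; apply: measurable_funX; exact: ml.
- move=> x Ax; rewrite !abse_EFin lee_fin.
  rewrite [X in _ <= X]ger0_norm; last first.
    by apply: mulr_ge0; [rewrite /K; nra | apply: addr_ge0].
  rewrite !normrM !(@ger0_norm _ (_ + _)) ?addr_ge0 ?sqr_ge0 //.
  rewrite -mulrDr mulrCA; apply: ler_wpM2l => //; exact: sq_bound.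
- apply: (@eq_integrable _ _ _ mu A mA
    (fun x => K%:E * ((abse \o (fun x => (r x * (g.1 x ^+ 2 + g.2 x ^+ 2))%:E)) x +
       (abse \o (fun x => (r x * (h.1 x ^+ 2 + h.2 x ^+ 2))%:E)) x))%E).
    by move=> x _; rewrite /comp !abse_EFin -EFinD -EFinM.
  apply: integrableZl => //; apply: integrableD => //; exact: integrable_abse.
Qed.
End L.

Section C.
Variable R : realType.

Definition lin (al be : R) (g h : cfun R) : cfun R :=
  (fun x => al * g.1 x + be * h.1 x, fun x => al * g.2 x + be * h.2 x).
Definition rf (g : cfun R) : cfun R := (fun x => g.1 (- x), fun x => g.2 (- x)).

Lemma cvg_lin (F : set_system R) {FF : Filter F} (al be : R) (f g : R -> R) l l' :
  f @ F --> l -> g @ F --> l' -> (fun x => al * f x + be * g x) @ F --> al * l + be * l'.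
Proof.
move=> hf hg; apply: cvgD.
  by apply: cvgM => //; exact: cvg_cst.
by apply: cvgM => //; exact: cvg_cst.
Qed.

Lemma clim_lin (F : set_system R) {FF : Filter F} (al be : R) (w w' : cfun R) l l' :
  clim F w l -> clim F w' l' ->
  clim F (lin al be w w') (al * l.1 + be * l'.1, al * l.2 + be * l'.2).
Proof. by move=> [h1 h2] [h3 h4]; split; apply: cvg_lin. Qed.

Lemma clim_refl (w : cfun R) l : clim (0 : R)^'- w l -> clim (0 : R)^'+ (rf w) l.
Proof.
move=> [h1 h2]; split.
  by move/cvg_at_leftNP : h1; rewrite oppr0.
by move/cvg_at_leftNP : h2; rewrite oppr0.
Qed.

Lemma clim_refl' (w : cfun R) l : clim (0 : R)^'+ w l -> clim (0 : R)^'- (rf w) l.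
Proof.
move=> [h1 h2]; split.
  by move/cvg_at_rightNP : h1; rewrite oppr0.
by move/cvg_at_rightNP : h2; rewrite oppr0.
Qed.

Lemma clim_eqR (w w' : cfun R) l : (forall x, 0 < x -> w.1 x = w'.1 x /\ w.2 x = w'.2 x) ->
  clim (0 : R)^'+ w l -> clim (0 : R)^'+ w' l.
Proof.
move=> e [h1 h2]; split.
  apply: cvg_trans h1; apply: near_eq_cvg; near=> x.
  have hx : 0 < x by near: x; exact: nbhs_right_gt.
  by have [] := e x hx.
apply: cvg_trans h2; apply: near_eq_cvg; near=> x.
have hx : 0 < x by near: x; exact: nbhs_right_gt.
  by have [] := e x hx.
Unshelve. all: end_near.
Qed.

Lemma clim_eqL (w w' : cfun R) l : (forall x, x < 0 -> w.1 x = w'.1 x /\ w.2 x = w'.2 x) ->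
  clim (0 : R)^'- w l -> clim (0 : R)^'- w' l.
Proof.
move=> e [h1 h2]; split.
  apply: cvg_trans h1; apply: near_eq_cvg; near=> x.
  have hx : x < 0 by near: x; exact: nbhs_left_lt.
  by have [] := e x hx.
apply: cvg_trans h2; apply: near_eq_cvg; near=> x.
have hx : x < 0 by near: x; exact: nbhs_left_lt.
  by have [] := e x hx.
Unshelve. all: end_near.
Qed.

End C.

Section Alg.
Variable R : realType.

Definition bc (al X Y : R) : Prop := X * cos al + Y * sin al = 0.

Lemma bc_acot y X Y : bc (acot y) X Y <-> X * y + Y = 0.
Proof.
rewrite /bc /acot.
have -> : pi / 2 - atan y = - (atan y - pi / 2) by rewrite opprB.
rewrite cosN sinN cosBpihalf sinBpihalf opprK.
have c0 : 0 < cos (atan y).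
  by apply: cos_gt0_pihalf; rewrite atan_gtNpi2 atan_ltpi2.
have sE : sin (atan y) = y * cos (atan y).
  have := atanK y; rewrite /tan => h.
  by rewrite -{2}h mulfVK // gt_eqF.
rewrite sE mulrA -mulrDl; split.
  by move/eqP; rewrite mulf_eq0 (gt_eqF c0) orbF => /eqP.
by move=> ->; rewrite mul0r.
Qed.

Lemma bc_pi X Y : bc pi X Y <-> X = 0.
Proof. by rewrite /bc cospi sinpi; split => h; lra. Qed.

Variable c : R.
Hypothesis c0 : c != 0.

Lemma acot_eq m12 y X Y : m12 != 0 -> X * y + Y * m12 = 0 -> bc (acot (y / m12)) X Y.
Proof.
move=> m0 h; apply/bc_acot; apply: (mulIf m0); rewrite mul0r -[RHS]h; field.
exact: m0.
Qed.

Lemma alg_fwd m11 m12 m21 Ap Bp An Bn :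
  m11 * m11 - m12 * m21 = 1 ->
  An = m11 * Ap + m12 * Bp -> Bn = m21 * Ap + m11 * Bp ->
  bc (alpha_of m11 m12 m21) (c * (Ap - An)) (c * (Bp + Bn)) /\
  bc (alpha'_of m11 m12 m21) (c * (Ap + An)) (c * (Bp - Bn)).
Proof.
move=> det -> ->; rewrite /alpha_of /alpha'_of.
have [m12z|m12n] := eqVneq m12 0; rewrite /=.
  move: det; rewrite m12z mul0r subr0 => det.
  have : (m11 - 1) * (m11 + 1) = 0 by rewrite mulrDr mulr1 mulrBl mul1r addrA subrK det subrr.
  move/eqP; rewrite mulf_eq0 => /orP[|] /eqP h.
    have -> : m11 = 1 by apply/eqP; rewrite -subr_eq0 h.
    have -> : (1 == -1 :> R) = false by apply/negbTE/eqP; lra.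
    split; first by apply/bc_pi; ring.
    by apply/bc_acot; field.
  have -> : m11 = -1 by apply/eqP; rewrite -subr_eq0 opprK h.
  rewrite eqxx; split; first by apply/bc_acot; field.
  by apply/bc_pi; ring.
split; apply: acot_eq => //.
  transitivity (c * Ap * (1 - (m11 * m11 - m12 * m21))); first by ring.
  by rewrite det subrr mulr0.
transitivity (c * Ap * ((m11 * m11 - m12 * m21) - 1)); first by ring.
by rewrite det subrr mulr0.
Qed.

Lemma solveY (X y Y : R) : X * y + Y = 0 -> Y = - (X * y).
Proof. by move/eqP; rewrite addrC addr_eq0 => /eqP. Qed.

Lemma alg_bwd m11 m12 m21 Ao Bo Ae Be :
  m11 * m11 - m12 * m21 = 1 ->
  bc (alpha_of m11 m12 m21) Ao Bo -> bc (alpha'_of m11 m12 m21) Ae Be ->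
  c * (Ae - Ao) = m11 * (c * (Ao + Ae)) + m12 * (c * (Bo + Be)) /\
  c * (Bo - Be) = m21 * (c * (Ao + Ae)) + m11 * (c * (Bo + Be)).
Proof.
move=> det; rewrite /alpha_of /alpha'_of.
have [m12z|m12n] := eqVneq m12 0; rewrite /=.
  move: det; rewrite m12z mul0r subr0 => det.
  have : (m11 - 1) * (m11 + 1) = 0 by rewrite mulrDr mulr1 mulrBl mul1r addrA subrK det subrr.
  move/eqP; rewrite mulf_eq0 => /orP[|] /eqP h.
    have -> : m11 = 1 by apply/eqP; rewrite -subr_eq0 h.
    have -> : (1 == -1 :> R) = false by apply/negbTE/eqP; lra.
    move=> /bc_pi -> /bc_acot h2.
    rewrite (solveY h2).
    by split; field.
  have -> : m11 = -1 by apply/eqP; rewrite -subr_eq0 opprK h.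
  rewrite eqxx => /bc_acot h2 /bc_pi ->.
  rewrite (solveY h2).
  by split; field.
move=> /bc_acot h1 /bc_acot h2.
have e1 := solveY h1.
have e2 := solveY h2.
rewrite e1 e2; split; first by field.
apply/eqP; rewrite -subr_eq0; apply/eqP.
transitivity (c * (Ao + Ae) * ((m11 * m11 - m12 * m21) - 1) / m12); first by field.
by rewrite det subrr mulr0 mul0r.
Qed.
End Alg.

Lemma det22 (R : comNzRingType) (A : 'M[R]_2) :
  \det A = A ord0 ord0 * A ord_max ord_max - A ord0 ord_max * A ord_max ord0.
Proof.
rewrite (expand_det_row _ ord0) !big_ord_recl big_ord0 addr0 /cofactor !det_mx11.
rewrite /= !mxE /=.
have -> : lift ord0 (0 : 'I_1) = ord_max :> 'I_2 by apply/val_inj.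
have -> : lift (ord_max : 'I_2) (0 : 'I_1) = ord0 :> 'I_2 by apply/val_inj.
rewrite expr0 mul1r /= expr1 mulN1r mulrN.
by [].
Qed.

Section M.
Variable R : realType.
Local Notation mu := (@lebesgue_measure R).
Variables (a : \bar R) (p q r : R -> R) (u u1 uh uh1 : R -> R).
Hypotheses (p_even : forall x, p (- x) = p x) (q_even : forall x, q (- x) = q x)
  (r_even : forall x, r (- x) = r x) (r_meas : measurable_fun (Jtwo a) r).

Definition cc : R := (Num.sqrt 2)^-1.
Lemma cc2 : cc * cc = 2^-1.
Proof. by rewrite /cc -invfM -expr2 sqr_sqrtr. Qed.
Lemma cc_neq0 : cc != 0.
Proof. by rewrite /cc invr_eq0 sqrtr_eq0 -ltNge. Qed.
Lemma cc2E (k : R) : 2 * (cc * cc) * k = k.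
Proof. by rewrite cc2 mulfV ?mul1r. Qed.

Definition U (g : cfun R) : cfun R * cfun R := (lin cc (- cc) g (rf g), lin cc cc g (rf g)).
Definition U1 (g1 : cfun R) : cfun R * cfun R := (lin cc cc g1 (rf g1), lin cc (- cc) g1 (rf g1)).
Definition V (k : cfun R * cfun R) : cfun R :=
  (fun x => if 0 < x then cc * k.1.1 x + cc * k.2.1 x else - cc * k.1.1 (- x) + cc * k.2.1 (- x),
   fun x => if 0 < x then cc * k.1.2 x + cc * k.2.2 x else - cc * k.1.2 (- x) + cc * k.2.2 (- x)).
Definition V1 (k : cfun R * cfun R) : cfun R :=
  (fun x => if 0 < x then cc * k.1.1 x + cc * k.2.1 x else cc * k.1.1 (- x) + - cc * k.2.1 (- x),
   fun x => if 0 < x then cc * k.1.2 x + cc * k.2.2 x else cc * k.1.2 (- x) + - cc * k.2.2 (- x)).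

Lemma UV k x : 0 < x ->
  [/\ (U (V k)).1.1 x = k.1.1 x, (U (V k)).1.2 x = k.1.2 x,
      (U (V k)).2.1 x = k.2.1 x & (U (V k)).2.2 x = k.2.2 x].
Proof.
move=> x0; have nx : (0 < - x) = false by apply/negbTE; rewrite -leNgt oppr_le0 ltW.
rewrite /U /V /lin /rf /= x0 nx !opprK.
split.
- by rewrite -[RHS]cc2E; ring.
- by rewrite -[RHS]cc2E; ring.
- by rewrite -[RHS]cc2E; ring.
- by rewrite -[RHS]cc2E; ring.
Qed.

Lemma Ipos_Jtwo : Ipos a `<=` Jtwo a. Proof. by move=> x; right. Qed.
Lemma Ineg_Jtwo : Ineg a `<=` Jtwo a. Proof. by move=> x; left. Qed.
Lemma r_meas_pos : measurable_fun (Ipos a) r.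
Proof. exact: measurable_funS (Jtwo_meas a) Ipos_Jtwo r_meas. Qed.

Lemma L2c_U g : L2c (Jtwo a) r g -> L2c (Ipos a) r (U g).1 /\ L2c (Ipos a) r (U g).2.
Proof.
move=> hg.
have gp := L2c_sub (Jtwo_meas a) (Ipos_meas a) Ipos_Jtwo hg.
have gn := L2c_sub (Jtwo_meas a) (Ineg_meas a) Ineg_Jtwo hg.
have grp : L2c (Ipos a) r (rf g).
  by rewrite -refl_Ineg; exact: (L2c_refl r_even (Ineg_meas a) gn).
by split; apply: L2c_lin => //; [exact: Ipos_meas | exact: r_meas_pos | exact: Ipos_meas | exact: r_meas_pos].
Qed.

Lemma L2c_V k : L2c (Ipos a) r k.1 -> L2c (Ipos a) r k.2 -> L2c (Jtwo a) r (V k).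
Proof.
move=> h1 h2; apply: L2c_union; [exact: Ineg_meas | exact: Ipos_meas | |].
  have := L2c_lin (- cc) cc (Ipos_meas a) r_meas_pos h1 h2.
  move/(L2c_refl r_even (Ipos_meas a)); rewrite refl_Ipos.
  apply: L2c_ext; first exact: Ineg_meas.
  move=> x [_ x0]; rewrite /V /=; have -> : (0 < x) = false by apply/negbTE; rewrite -leNgt ltW.
  by [].
have := L2c_lin cc cc (Ipos_meas a) r_meas_pos h1 h2.
apply: L2c_ext; first exact: Ipos_meas.
by move=> x [x0 _]; rewrite /V /= x0.
Qed.


Lemma norm_U g : L2c (Jtwo a) r g ->
  (cnorm2 (Ipos a) r (U g).1 + cnorm2 (Ipos a) r (U g).2)%E = cnorm2 (Jtwo a) r g.
Proof.
move=> hg; have [io ie] := L2c_U hg.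
have gp := L2c_sub (Jtwo_meas a) (Ipos_meas a) Ipos_Jtwo hg.
have gn := L2c_sub (Jtwo_meas a) (Ineg_meas a) Ineg_Jtwo hg.
have inr := integrable_refl (Ineg_meas a) gn.2.2.
rewrite refl_Ineg in inr.
rewrite /cnorm2 -integralD //; [|exact: Ipos_meas|exact: io.2.2|exact: ie.2.2].
rewrite /Jtwo integral_setU //; [|exact: Ineg_meas|exact: Ipos_meas| |exact: Ineg_Ipos_disj]; last first.
  exact: (measurable_int mu hg.2.2).
rewrite (@integral_refl _ (Ineg a)); [|exact: Ineg_meas|exact: (measurable_int mu gn.2.2)].
rewrite refl_Ineg -integralD //; try exact: Ipos_meas; try exact: inr; try exact: gp.2.2.
apply: eq_integral => x _; rewrite -!EFinD; congr EFin.
rewrite /U /lin /rf /= r_even.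
by rewrite -[RHS]cc2E; ring.
Qed.

Lemma aeqc_pt (A : set R) (g h : cfun R) :
  (forall x, A x -> g.1 x = h.1 x /\ g.2 x = h.2 x) -> aeqc A g h.
Proof. by move=> e; apply: aeW => x; exact: e. Qed.

Lemma Ipos_neg x : Ipos a x -> Ineg a (- x).
Proof. by move=> h; rewrite -refl_Ipos; rewrite /refl /= opprK. Qed.

Lemma aeqc_lin (al be : R) (g h : cfun R) : aeqc (Jtwo a) g h ->
  aeqc (Ipos a) (lin al be g (rf g)) (lin al be h (rf h)).
Proof.
move=> H.
have H' : {ae mu, forall x, Jtwo a (- x) -> g.1 (- x) = h.1 (- x) /\ g.2 (- x) = h.2 (- x)}.
  exact: (negligible_refl H).
apply: (negligibleS _ (negligibleU H H')).
move=> x /= hx; apply/not_andP; apply: contra_not hx => -[h1 h2] Ix.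
have [e1 e2] := h1 (Ipos_Jtwo Ix).
have [e3 e4] := h2 (Ineg_Jtwo (Ipos_neg Ix)).
by rewrite e1 e2 e3 e4.
Qed.


Lemma qsol_posneg (al be : R) G G1 F G1' :
  qsol (Ipos a) p q r G G1 F -> qsol (Ineg a) p q r G G1 F ->
  (forall x, Ipos a x -> G1' x = al * G1 x - be * G1 (- x)) ->
  qsol (Ipos a) p q r (fun x => al * G x + be * G (- x)) G1' (fun x => al * F x + be * F (- x)).
Proof.
move=> hp hn e.
have hr := qsol_refl p_even q_even r_even hn; rewrite refl_Ineg in hr.
have := qsol_lin al be hp hr.
apply: qsol_ext => x Ix; split => //.
by rewrite e //; ring.
Qed.

Lemma tmax_U g g1 f : smax a p q r g g1 f ->
  tmax (Ipos a) p q r (U g).1 (U1 g1).1 (U f).1 /\ tmax (Ipos a) p q r (U g).2 (U1 g1).2 (U f).2.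
Proof.
move=> [[gn [fn [qn1 qn2]]] [gp [fp [qp1 qp2]]]].
have gJ := L2c_union (Ineg_meas a) (Ipos_meas a) gn gp.
have fJ := L2c_union (Ineg_meas a) (Ipos_meas a) fn fp.
have [gU1 gU2] := L2c_U gJ; have [fU1 fU2] := L2c_U fJ.
split; split => //; split => //; split.
- by apply: (@qsol_posneg cc (- cc) g.1 g1.1 f.1 _ qp1 qn1) => x _; rewrite /U1 /lin /rf /=; ring.
- by apply: (@qsol_posneg cc (- cc) g.2 g1.2 f.2 _ qp2 qn2) => x _; rewrite /U1 /lin /rf /=; ring.
- by apply: (@qsol_posneg cc cc g.1 g1.1 f.1 _ qp1 qn1) => x _; rewrite /U1 /lin /rf /=; ring.
- by apply: (@qsol_posneg cc cc g.2 g1.2 f.2 _ qp2 qn2) => x _; rewrite /U1 /lin /rf /=; ring.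
Qed.

Lemma clim_val (F : set_system R) (w : cfun R) l l' : clim F w l -> l = l' -> clim F w l'.
Proof. by move=> h <-. Qed.

Lemma clim_posneg (al be : R) (W Wn w' : cfun R) l ln :
  clim (0 : R)^'+ W l -> clim (0 : R)^'- Wn ln ->
  (forall x, 0 < x -> w'.1 x = al * W.1 x + be * Wn.1 (- x) /\
                      w'.2 x = al * W.2 x + be * Wn.2 (- x)) ->
  clim (0 : R)^'+ w' (al * l.1 + be * ln.1, al * l.2 + be * ln.2).
Proof.
move=> hW hWn e.
apply: (@clim_eqR _ (lin al be W (rf Wn))).
  by move=> x x0; rewrite /lin /rf /=; have [-> ->] := e x x0.
by apply: clim_lin => //; exact: clim_refl.
Qed.

Lemma bv_U (g g1 : cfun R) Ap Bp An Bn :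
  bv_pos u u1 uh uh1 g g1 Ap Bp -> bv_neg u u1 uh uh1 g g1 An Bn ->
  bv_pos u u1 uh uh1 (U g).1 (U1 g1).1 (cc * (Ap.1 - An.1), cc * (Ap.2 - An.2))
    (cc * (Bp.1 + Bn.1), cc * (Bp.2 + Bn.2)) /\
  bv_pos u u1 uh uh1 (U g).2 (U1 g1).2 (cc * (Ap.1 + An.1), cc * (Ap.2 + An.2))
    (cc * (Bp.1 - Bn.1), cc * (Bp.2 - Bn.2)).
Proof.
move=> [hp1 hp2] [hn1 hn2].
split; split.
- apply: clim_val; first apply: (clim_posneg (al := cc) (be := - cc) hp1 hn1).
    by move=> x _; rewrite /wr /U /U1 /lin /rf /= !opprK; split; ring.
  by rewrite /=; congr (_, _); ring.
- apply: clim_val; first apply: (clim_posneg (al := cc) (be := cc) hp2 hn2).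
    by move=> x _; rewrite /wr /U /U1 /lin /rf /= !opprK; split; ring.
  by rewrite /=; congr (_, _); ring.
- apply: clim_val; first apply: (clim_posneg (al := cc) (be := cc) hp1 hn1).
    by move=> x _; rewrite /wr /U /U1 /lin /rf /= !opprK; split; ring.
  by rewrite /=; congr (_, _); ring.
- apply: clim_val; first apply: (clim_posneg (al := cc) (be := - cc) hp2 hn2).
    by move=> x _; rewrite /wr /U /U1 /lin /rf /= !opprK; split; ring.
  by rewrite /=; congr (_, _); ring.
Qed.

Lemma qsol_V (G H G1 H1 F K Gv G1v Fv : R -> R) :
  qsol (Ipos a) p q r G G1 F -> qsol (Ipos a) p q r H H1 K ->
  (forall x, 0 < x -> [/\ Gv x = cc * G x + cc * H x, G1v x = cc * G1 x + cc * H1 x &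
                         Fv x = cc * F x + cc * K x]) ->
  (forall x, x < 0 -> [/\ Gv x = - cc * G (- x) + cc * H (- x),
                         G1v x = cc * G1 (- x) + - cc * H1 (- x) &
                         Fv x = - cc * F (- x) + cc * K (- x)]) ->
  qsol (Ipos a) p q r Gv G1v Fv /\ qsol (Ineg a) p q r Gv G1v Fv.
Proof.
move=> hG hH ep en; split.
  have := qsol_lin cc cc hG hH; apply: qsol_ext => x [x0 _].
  by have [-> -> ->] := ep x x0.
have := qsol_refl p_even q_even r_even (qsol_lin (- cc) cc hG hH).
rewrite refl_Ipos; apply: qsol_ext => x [_ x0].
have [-> -> ->] := en x x0; split => //; ring.
Qed.

Lemma tmax_V (k k1 kf : cfun R * cfun R) :
  tmax (Ipos a) p q r k.1 k1.1 kf.1 -> tmax (Ipos a) p q r k.2 k1.2 kf.2 ->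
  smax a p q r (V k) (V1 k1) (V kf).
Proof.
move=> [g1 [f1 [q11 q12]]] [g2 [f2 [q21 q22]]].
have gJ := L2c_V g1 g2; have fJ := L2c_V f1 f2.
have gn := L2c_sub (Jtwo_meas a) (Ineg_meas a) Ineg_Jtwo gJ.
have gp := L2c_sub (Jtwo_meas a) (Ipos_meas a) Ipos_Jtwo gJ.
have fn := L2c_sub (Jtwo_meas a) (Ineg_meas a) Ineg_Jtwo fJ.
have fp := L2c_sub (Jtwo_meas a) (Ipos_meas a) Ipos_Jtwo fJ.
have ep : forall x : R, 0 < x -> (0 < x) = true by [].
have en : forall x : R, x < 0 -> (0 < x) = false.
  by move=> x x0; apply/negbTE; rewrite -leNgt ltW.
have [a1 b1] : qsol (Ipos a) p q r (V k).1 (V1 k1).1 (V kf).1 /\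
    qsol (Ineg a) p q r (V k).1 (V1 k1).1 (V kf).1.
  apply: (qsol_V q11 q21) => x x0; first by rewrite /V /V1 /= x0.
  by rewrite /V /V1 /= (en x x0).
have [a2 b2] : qsol (Ipos a) p q r (V k).2 (V1 k1).2 (V kf).2 /\
    qsol (Ineg a) p q r (V k).2 (V1 k1).2 (V kf).2.
  apply: (qsol_V q12 q22) => x x0; first by rewrite /V /V1 /= x0.
  by rewrite /V /V1 /= (en x x0).
by split; split => //; split.
Qed.

Lemma bv_V (k k1 : cfun R * cfun R) Ao Bo Ae Be :
  bv_pos u u1 uh uh1 k.1 k1.1 Ao Bo -> bv_pos u u1 uh uh1 k.2 k1.2 Ae Be ->
  bv_pos u u1 uh uh1 (V k) (V1 k1) (cc * (Ao.1 + Ae.1), cc * (Ao.2 + Ae.2))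
    (cc * (Bo.1 + Be.1), cc * (Bo.2 + Be.2)) /\
  bv_neg u u1 uh uh1 (V k) (V1 k1) (cc * (Ae.1 - Ao.1), cc * (Ae.2 - Ao.2))
    (cc * (Bo.1 - Be.1), cc * (Bo.2 - Be.2)).
Proof.
move=> [ho1 ho2] [he1 he2].
have en : forall x : R, x < 0 -> (0 < x) = false.
  by move=> x x0; apply/negbTE; rewrite -leNgt ltW.
split; split.
- apply: clim_val; first apply: (clim_eqR _ (clim_lin cc cc ho1 he1)).
    by move=> x x0; rewrite /wr /V /V1 /lin /= x0; split; ring.
  by rewrite /=; congr (_, _); ring.
- apply: clim_val; first apply: (clim_eqR _ (clim_lin cc cc ho2 he2)).
    by move=> x x0; rewrite /wr /V /V1 /lin /= x0; split; ring.
  by rewrite /=; congr (_, _); ring.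
- apply: clim_val; first apply: (clim_eqL _ (clim_refl' (clim_lin (- cc) cc ho1 he1))).
    by move=> x x0; rewrite /wr /V /V1 /lin /rf /= (en x x0); split; ring.
  by rewrite /=; congr (_, _); ring.
- apply: clim_val; first apply: (clim_eqL _ (clim_refl' (clim_lin cc (- cc) ho2 he2))).
    by move=> x x0; rewrite /wr /V /V1 /lin /rf /= (en x x0); split; ring.
  by rewrite /=; congr (_, _); ring.
Qed.

Lemma UVe k : aeqc (Ipos a) (U (V k)).1 k.1 /\ aeqc (Ipos a) (U (V k)).2 k.2.
Proof.
by split; apply: aeqc_pt => x [x0 _]; have [h1 h2 h3 h4] := UV k x0; split.
Qed.

Lemma main_equiv m11 m12 m21 : m11 * m11 - m12 * m21 = 1 ->
  unitarily_equiv (HJ a r) (HPP a r) (sR0 a p q r u u1 uh uh1 m11 m12 m21 m11)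
    (fun g f => talpha a p q r u u1 uh uh1 (alpha_of m11 m12 m21) g.1 f.1 /\
                talpha a p q r u u1 uh uh1 (alpha'_of m11 m12 m21) g.2 f.2).
Proof.
move=> det; exists U; split; last split; last split; last split; last split; last split;
  last split.
- by move=> g hg; exact: L2c_U.
- by move=> g h _ _ e; split; exact: aeqc_lin.
- by move=> g h _ _; split; apply: aeqc_pt => x _; rewrite /U /lin /rf /cadd /=; split; ring.
- by move=> c1 c2 g _; split; apply: aeqc_pt => x _; rewrite /U /lin /rf /cscale /=; split; ring.
- by move=> g hg; exact: norm_U.
- move=> k [k1 k2]; exists (V k); split; first exact: L2c_V.
  exact: UVe.
- move=> g f [g1 [hs [Ap [Bp [An [Bn [bp [bn [r1 [r2 [r3 r4]]]]]]]]]]].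
  exists (U g), (U f); split; last by split; split; apply: aeqc_pt.
  have [t1 t2] := tmax_U hs; have [b1 b2] := bv_U bp bn.
  have [c1 c1'] := alg_fwd cc det r1 r2.
  have [c2 c2'] := alg_fwd cc det r3 r4.
  split.
    by exists (U1 g1).1; split => //; do 2 eexists; split; first exact: b1.
  by exists (U1 g1).2; split => //; do 2 eexists; split; first exact: b2.
- move=> k kf [[k1 [tk1 [Ao [Bo [bo [co1 co2]]]]]] [k2 [tk2 [Ae [Be [be [ce1 ce2]]]]]]].
  exists (V k), (V kf); split; last first.
    by split; [have [h1 h2] := UVe k | have [h1 h2] := UVe kf]; split.
  exists (V1 (k1, k2)); split; first exact: (@tmax_V k (k1, k2) kf).
  have [bp bn] := bv_V (k1 := (k1, k2)) bo be.
  have [d1 d2] := alg_bwd cc det co1 ce1.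
  have [d3 d4] := alg_bwd cc det co2 ce2.
  by do 4 eexists; split; first exact: bp; split; first exact: bn.
Qed.
End M.

Theorem theorem4p9 (R : realType) (a : \bar R) (ha : (0 < a)%E)
  (p q r : R -> R)
  (p_even : forall x, p (- x) = p x)
  (q_even : forall x, q (- x) = q x)
  (r_even : forall x, r (- x) = r x)
  (p_meas : measurable_fun (Jtwo a) p)
  (q_meas : measurable_fun (Jtwo a) q)
  (r_meas : measurable_fun (Jtwo a) r)
  (p_pos : {ae @lebesgue_measure R, forall x, Jtwo a x -> 0 < p x})
  (r_pos : {ae @lebesgue_measure R, forall x, Jtwo a x -> 0 < r x})
  (p_inv_loc : loc_int (Ineg a) (fun x => (p x)^-1))
  (q_loc : loc_int (Ineg a) q)
  (r_loc : loc_int (Ineg a) r)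
  (* +a and -a are limit point *)
  (LP_pos : ~ LC_right a p q r)
  (LP_neg : ~ LC_left_neg a p q r)
  (* 0+ and 0- are limit circle nonoscillatory *)
  (LC0p : LC_zero_pos a p q r) (LC0n : LC_zero_neg a p q r)
  (NO0p : NO_zero_pos a p q r) (NO0n : NO_zero_neg a p q r)
  (* S_min is bounded below by lam0 *)
  (lam0 : R)
  (Smin_lb : forall (g g1 f : cfun R), smax a p q r g g1 f ->
     (exists s t : R, 0 < s /\ s <= t /\ (t%:E < a)%E /\
        forall x, ~ (s <= `|x| <= t) -> g.1 x = 0 /\ g.2 x = 0) ->
     (lam0%:E * cnorm2 (Jtwo a) r g <=
        \int[@lebesgue_measure R]_(x in Jtwo a)
            (r x * (f.1 x * g.1 x + f.2 x * g.2 x))%:E)%E)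
  (* principal / nonprincipal solutions at 0+ (with quasi-derivatives) *)
  (u u1 uh uh1 : R -> R)
  (u_sol : qsol (Ipos a) p q r u u1 (fun x => lam0 * u x))
  (uh_sol : qsol (Ipos a) p q r uh uh1 (fun x => lam0 * uh x))
  (u_principal : exists e : R, 0 < e /\ (e%:E < a)%E /\
     (forall x, 0 < x <= e -> u x != 0) /\
     (\int[@lebesgue_measure R]_(x in [set y : R | (0 < y < e)%R])
        ((p x * u x ^+ 2)^-1)%:E = +oo)%E)
  (W_uh_u : forall x, Ipos a x -> uh x * u1 x - uh1 x * u x = 1)
  (R0 : 'M[R]_2) (R0_det : \det R0 = 1) (R0_diag : R0 ord0 ord0 = R0 ord_max ord_max) :
  unitarily_equiv (HJ a r) (HPP a r)
    (sR0 a p q r u u1 uh uh1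
       (R0 ord0 ord0) (R0 ord0 ord_max) (R0 ord_max ord0) (R0 ord_max ord_max))
    (fun g f =>
       talpha a p q r u u1 uh uh1
         (alpha_of (R0 ord0 ord0) (R0 ord0 ord_max) (R0 ord_max ord0)) g.1 f.1 /\
       talpha a p q r u u1 uh uh1
         (alpha'_of (R0 ord0 ord0) (R0 ord0 ord_max) (R0 ord_max ord0)) g.2 f.2).
Proof.
Proof.
have det : R0 ord0 ord0 * R0 ord0 ord0 - R0 ord0 ord_max * R0 ord_max ord0 = 1.
  by rewrite -R0_det det22 R0_diag.
rewrite -R0_diag.
by apply: main_equiv.
Qed.
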